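(* Let $\sigma$ and $\tau$ be two $\mu$-rigid strategies on an arena $A$. If $\mathrm{GR}(\sigma)=\mathrm{GR}(\tau)$ then $\sigma=\tau$.
   Context: First-order variables are split into three disjoint countable sets: $\mathcal A$-, $\mathcal O$- and $\mathcal P$-variables. $\mathcal{AP}$-terms (resp. $\mathcal{OP}$-terms) are first-order terms built from $\mathcal A$- and $\mathcal P$-variables (resp. $\mathcal O$- and $\mathcal P$-variables). Arena: a finite forest whose nodes (moves) carry a first-order label (a list of $\mathcal A$-variables, all distinct across the arena) and an atomic label (a list of atomic formulas $X\,t_1\dots t_k$ with $\mathcal{AP}$-terms whose $\mathcal A$-variables occur in the first-order label of the node or an ancestor). Polarity is depth parity: even = Opponent (O), odd = Player (P); roots are initial. Justified sequence: finite sequence of move occurrences; each non-initial occurrence has a $\lambda$-pointer to an earlier occurrence of its father; each element of the atomic label of an occurrence has at most one $\mu$-pointer to an element of the atomic label of an earlier occurrence of opposite polarity. Instantiations: each O-move occurrence carries an $\mathcal O$-instantiation (list of $\mathcal O$-variables of the length of its first-order label), each P-move occurrence a $\mathcal P$-instantiation (list of $\mathcal{OP}$-terms of that length); all $\mathcal O$-variables in $\mathcal O$-instantiations distinct. For an occurrence $m$ with instantiation $[t_1..t_k]$ and first-order label $[x_1..x_k]$, $\theta_m=\{x_i\mapsto t_i\}$ if $m$ is initial, else $\theta_n\cup\{x_i\mapsto t_i\}$ with $n$ its $\lambda$-justifier. Play: instantiated justified sequence with alternating polarities, no $\mu$-pointers from O-moves, exactly one $\mu$-pointer from each element of the atomic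 label of each P-move, every $\mu$-pointer from $X\,t_1..t_k$ at $m$ to $Y\,u_1..u_p$ at $n$ satisfying $X=Y$, $k=p$, $t_i\theta_m=u_i\theta_n$, and every $\mathcal O$-variable in a $\mathcal P$-instantiation occurring in an earlier $\mathcal O$-instantiation. An $\mathcal O$-renaming is an injection $\varsigma$ of $\mathcal O$-variables into themselves; $s\varsigma$ replaces each $o$ by $\varsigma(o)$ in all instantiations. Strategy: non-empty set of even-length plays closed under even-length prefixes, deterministic ($sm,sn\in\sigma\Rightarrow sm=sn$, including pointers and instantiations) and uniform (closed under $\mathcal O$-renamings). A play is $\mu$-rigid if for every Player move occurrence: its atomic label has the same length as that of the immediately preceding move, each of its $\mu$-pointers goes to the corresponding element (same position) of the atomic label of the immediately preceding move, and its instantiation equals the instantiation of the immediately preceding move. A strategy is $\mu$-rigid if all its plays are. $\mathrm{GR}(s)$ erases all instantiations and $\mu$-pointers from a play $s$ (keeping moves and $\lambda$-pointers); $\mathrm{GR}(\sigma)=\{\mathrm{GR}(s)\mid s\in\sigma\}$. *)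

(* Defs.v *)
From mathcomp Require Import all_boot.
Set Implicit Arguments. Unset Strict Implicit. Unset Printing Implicit Defensive.

Inductive var := VA of nat | VO of nat | VP of nat.

Definition ovar (v : var) : option nat := if v is VO o then Some o else None.
Definition is_Avar (v : var) : bool := if v is VA _ then true else false.
Definition is_Ovarv (v : var) : bool := if v is VO _ then true else false.

Section Games.
Variable F : Type.
Variable ar : F -> nat.

Inductive term := TVar of var | TApp of F & seq term.

Fixpoint term_vars (t : term) : seq var :=
  match t with TVar v => [:: v] | TApp _ ts => flatten (map term_vars ts) end.

Fixpoint wf_term (t : term) : bool :=
  match t with TVar _ => true | TApp f ts => (size ts == ar f) && all wf_term ts end.

Definition is_AP (t : term) : bool := wf_term t && all (fun v => ~~ is_Ovarv v) (term_vars t).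
Definition is_OP (t : term) : bool := wf_term t && all (fun v => ~~ is_Avar v) (term_vars t).
Definition is_Ovar (t : term) : bool := if t is TVar (VO _) then true else false.

Definition ovars (t : term) : seq nat := pmap ovar (term_vars t).
Definition ovars_inst (ts : seq term) : seq nat := flatten (map ovars ts).

Fixpoint assoc (x : nat) (th : seq (nat * term)) : option term :=
  match th with [::] => None | (y, u) :: th' => if x == y then Some u else assoc x th' end.

Fixpoint subst (th : seq (nat * term)) (t : term) : term :=
  match t with
  | TVar (VA x) => if assoc x th is Some u then u else t
  | TVar _ => t
  | TApp f ts => TApp f (map (subst th) ts)
  end.

Fixpoint rename (r : nat -> nat) (t : term) : term :=
  match t with
  | TVar (VO o) => TVar (VO (r o))
  | TVar _ => t
  | TApp f ts => TApp f (map (rename r) ts)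
  end.

(* atomic formula X t1 .. tk : (X, [:: t1; ..; tk]) *)
Definition atom := (nat * seq term)%type.
Definition atom0 : atom := (0, [::]).

(* Arena: moves are 0 .. a_size-1; a_father gives the father (None = root). *)
Record arena := Arena {
  a_size : nat;
  a_father : nat -> option nat;
  a_fo : nat -> seq nat;          (* first-order label: list of A-variables *)
  a_at : nat -> seq atom
}.

Fixpoint depth_aux (A : arena) (fuel m : nat) : nat :=
  match fuel with
  | 0 => 0
  | S f => if a_father A m is Some p then (depth_aux A f p).+1 else 0
  end.
Definition depth A m := depth_aux A m.+1 m.
Definition is_O_move A m : bool := ~~ odd (depth A m).

Fixpoint anc_aux (A : arena) (fuel m : nat) : seq nat :=
  match fuel with
  | 0 => [::]
  | S f => m :: (if a_father A m is Some p then anc_aux A f p else [::])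
  end.
Definition ancestors A m := anc_aux A m.+1 m.

Definition wf_arena (A : arena) : Prop :=
  [/\ (* finite forest (nodes numbered so that fathers come first) *)
      (forall m p, m < a_size A -> a_father A m = Some p -> p < m),
      uniq (flatten [seq a_fo A m | m <- iota 0 (a_size A)]) &
      (forall m, m < a_size A ->
         all (fun a : atom => all (fun t => is_AP t &&
              all (fun v => if v is VA x then has (fun n => x \in a_fo A n) (ancestors A m)
                            else true) (term_vars t)) a.2) (a_at A m))].

(* A move occurrence: the move, its lambda-pointer (index of an earlier
   occurrence), one optional mu-pointer per element of the atomic label
   (pair: index of earlier occurrence, position in its atomic label), and
   its instantiation. *)
Record occ := Occ {
  o_move : nat;
  o_lam : option nat;
  o_mu : seq (option (nat * nat));
  o_inst : seq term
}.
Definition occ0 : occ := Occ 0 None [::] [::].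

Section Seq.
Variable A : arena.

Definition at_of (s : seq occ) (i : nat) : seq atom := a_at A (o_move (nth occ0 s i)).
Definition pol (s : seq occ) (i : nat) : bool := is_O_move A (o_move (nth occ0 s i)).

Definition inst_jseq (s : seq occ) : Prop :=
  (forall i, i < size s ->
     let o := nth occ0 s i in
     [/\ o_move o < a_size A /\
         (match a_father A (o_move o) with
          | None => o_lam o = None
          | Some p => exists2 j, o_lam o = Some j & j < i /\ o_move (nth occ0 s j) = p
          end),
         size (o_mu o) = size (a_at A (o_move o)),
         (forall k jl, nth None (o_mu o) k = Some jl ->
             [/\ jl.1 < i, jl.2 < size (at_of s jl.1) & pol s jl.1 != pol s i]),
         size (o_inst o) = size (a_fo A (o_move o)) &
         (if pol s i then all is_Ovar (o_inst o) else all is_OP (o_inst o))])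
  /\ uniq (flatten [seq (if is_O_move A (o_move o) then ovars_inst (o_inst o) else [::]) | o <- s]).

Fixpoint theta_aux (s : seq occ) (fuel i : nat) : seq (nat * term) :=
  match fuel with
  | 0 => [::]
  | S f => let o := nth occ0 s i in
      zip (a_fo A (o_move o)) (o_inst o) ++
      (if o_lam o is Some j then theta_aux s f j else [::])
  end.
Definition theta (s : seq occ) (i : nat) := theta_aux s i.+1 i.

Definition play (s : seq occ) : Prop :=
  [/\ inst_jseq s,
      (forall i, i.+1 < size s -> pol s i != pol s i.+1),
      (forall i, i < size s ->
         if pol s i then all (fun x => ~~ isSome x) (o_mu (nth occ0 s i))
         else all isSome (o_mu (nth occ0 s i))),
      (forall i k j l, i < size s -> nth None (o_mu (nth occ0 s i)) k = Some (j, l) ->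
         let a := nth atom0 (at_of s i) k in
         let b := nth atom0 (at_of s j) l in
         [/\ a.1 = b.1, size a.2 = size b.2 &
             map (subst (theta s i)) a.2 = map (subst (theta s j)) b.2]) &
      (forall i o, i < size s -> ~~ pol s i -> o \in ovars_inst (o_inst (nth occ0 s i)) ->
         exists j, [/\ j < i, pol s j & o \in ovars_inst (o_inst (nth occ0 s j))])].

Definition rename_occ (r : nat -> nat) (o : occ) : occ :=
  Occ (o_move o) (o_lam o) (o_mu o) (map (rename r) (o_inst o)).

Definition strategy (sigma : seq occ -> Prop) : Prop :=
  [/\ exists s, sigma s,
      (forall s, sigma s -> play s /\ ~~ odd (size s)),
      (forall s k, sigma s -> ~~ odd k -> k <= size s -> sigma (take k s)),
      (forall s m n, sigma (rcons s m) -> sigma (rcons s n) -> m = n) &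
      (forall (r : nat -> nat) s, injective r -> sigma s -> sigma (map (rename_occ r) s))].

Definition mu_rigid_play (s : seq occ) : Prop :=
  forall i, i.+1 < size s -> ~~ pol s i.+1 ->
    [/\ size (at_of s i.+1) = size (at_of s i),
        o_mu (nth occ0 s i.+1) = [seq Some (i, k) | k <- iota 0 (size (at_of s i))] &
        o_inst (nth occ0 s i.+1) = o_inst (nth occ0 s i)].

Definition mu_rigid (sigma : seq occ -> Prop) : Prop :=
  forall s, sigma s -> mu_rigid_play s.

End Seq.

Definition GR_play (s : seq occ) : seq (nat * option nat) :=
  [seq (o_move o, o_lam o) | o <- s].
Definition GR (sigma : seq occ -> Prop) : seq (nat * option nat) -> Prop :=
  fun g => exists2 s, sigma s & GR_play s = g.

End Games.

(* Main.v *)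
Require Import Defs.
From mathcomp Require Import all_boot.
Set Implicit Arguments. Unset Strict Implicit.

Lemma le_sumn (s : seq nat) x : x \in s -> x <= sumn s.
Proof.
elim: s => //= y s IH; rewrite in_cons => /orP [/eqP -> | /IH H].
  exact: leq_addr.
by apply: (leq_trans H); apply: leq_addl.
Qed.

Lemma ext_inj (a b : seq nat) : uniq a -> uniq b -> size a = size b ->
  exists r : nat -> nat, injective r /\ map r a = b.
Proof.
move=> ua ub sab.
pose N := (sumn (a ++ b)).+1.
have HbN : forall y, y \in b -> y < N.
  by move=> y yb; rewrite ltnS; apply: le_sumn; rewrite mem_cat yb orbT.
exists (fun x => if x \in a then nth 0 b (index x a) else x + N); split.
  move=> x y /=.
  case xa: (x \in a); case ya: (y \in a).
  - move=> E; have: index x a = index y a.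
      apply/eqP; rewrite -(nth_uniq 0 _ _ ub) ?E //; by rewrite -sab index_mem.
    by move=> Ei; rewrite -(nth_index 0 xa) -(nth_index 0 ya) Ei.
  - move=> E; have : nth 0 b (index x a) < N by apply: HbN; rewrite mem_nth // -sab index_mem.
    by rewrite E ltnNge leq_addl.
  - move=> E; have : nth 0 b (index y a) < N by apply: HbN; rewrite mem_nth // -sab index_mem.
    by rewrite -E ltnNge leq_addl.
  - by move/addIn.
apply: (eq_from_nth (x0 := 0)); rewrite size_map // => i ia.
rewrite (nth_map 0) // mem_nth // index_uniq //.
Qed.

Lemma Ovar_form F (l : seq (term F)) : all (@is_Ovar F) l ->
  l = map (fun o => @TVar F (VO o)) (ovars_inst l).
Proof.
elim: l => //= x l IH /andP [hx hl].
case: x hx => // [[]] // o _ /=. by rewrite /ovars /= -IH.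
Qed.

Lemma size_ovars_inst F (l : seq (term F)) : all (@is_Ovar F) l ->
  size (ovars_inst l) = size l.
Proof. by move=> h; rewrite {2}(Ovar_form h) size_map. Qed.

Lemma allNone T (l : seq (option T)) : all (fun x => ~~ isSome x) l -> l = nseq (size l) None.
Proof. by elim: l => //= [[]] // l IH /IH {1}->. Qed.

Lemma first_O F ar (A : arena F) s : play ar A s -> 0 < size s -> pol A s 0.
Proof.
case=> [[H _]] _ _ _ _ /H [[_ Hf] _ _ _ _].
rewrite /pol /is_O_move /depth /=.
by case: (a_father A _) Hf => // p [j _ []].
Qed.

Lemma key F ar (A : arena F) (s t : seq (occ F)) :
  play ar A s -> play ar A t -> mu_rigid_play A s -> mu_rigid_play A t ->
  GR_play s = GR_play t ->
  exists r, injective r /\ map (rename_occ r) t = s.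
Proof.
move=> Ps Pt Rs Rt G.
have Hsz : size t = size s by rewrite -(size_map (fun o => (o_move o, o_lam o)) s) -(size_map (fun o => (o_move o, o_lam o)) t); congr size; exact: (esym G).
have HM : forall i, i < size t -> o_move (nth (@occ0 F) t i) = o_move (nth (@occ0 F) s i) /\ o_lam (nth (@occ0 F) t i) = o_lam (nth (@occ0 F) s i).
  move=> i it; have := congr1 (fun g => nth (0, None) g i) G.
  by rewrite /GR_play !(nth_map (@occ0 F)) -?Hsz // => -[-> ->].
have Hpol : forall i, i < size t -> pol A t i = pol A s i.
  by move=> i /HM [h _]; rewrite /pol h.
have P0 := first_O Pt.
case: Ps => [[Js Us] As Ms _ _]; case: Pt => [[Jt Ut] At Mt _ _].
pose LT := [seq (if is_O_move A (o_move o) then ovars_inst (o_inst o) else [::]) | o <- t].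
pose LS := [seq (if is_O_move A (o_move o) then ovars_inst (o_inst o) else [::]) | o <- s].
have Hsh : shape LT = shape LS.
  apply: (eq_from_nth (x0 := 0)); first by rewrite !size_map Hsz.
  move=> i; rewrite !size_map => it.
  have is' : i < size s by rewrite -Hsz.
  rewrite /shape !(nth_map [::]) ?size_map // !(nth_map (@occ0 F)) //.
  have [_ _ _ St Ot] := Jt i it; have [_ _ _ Ss Os] := Js i is'.
  move: (Hpol i it) Ot Os; rewrite /pol; case: (HM i it) => -> _.
  case: ifP => // _ _ Ot Os.
  by rewrite !size_ovars_inst // St Ss; case: (HM i it) => ->.
have [r [ri Hr]] : exists r : nat -> nat, injective r /\ map r (flatten LT) = flatten LS.
  apply: ext_inj => //; by rewrite !size_flatten Hsh.
have HB : map (map r) LT = LS.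
  rewrite -(flattenK LS) -Hsh -Hr map_flatten.
  have -> : shape LT = shape (map (map r) LT).
    by rewrite /shape -map_comp; apply: eq_map => x /=; rewrite size_map.
  by rewrite flattenK.
have HO : forall i, i < size t -> pol A t i ->
    map (rename r) (o_inst (nth (@occ0 F) t i)) = o_inst (nth (@occ0 F) s i).
  move=> i it Oi; have is' : i < size s by rewrite -Hsz.
  have := congr1 (fun g => nth [::] g i) HB.
  rewrite /= (nth_map [::]) ?size_map // !(nth_map (@occ0 F)) //.
  have Oi' := Oi; rewrite Hpol // in Oi'.
  have [_ _ _ _ Ot] := Jt i it; have [_ _ _ _ Os] := Js i is'.
  rewrite Oi in Ot; rewrite Oi' in Os.
  move: Oi Oi'; rewrite /pol => -> -> E.
  rewrite (Ovar_form Ot) (Ovar_form Os) -E -map_comp -map_comp.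
  by apply: eq_map.
exists r; split => //.
have occ_eta : forall o : occ F, o = Occ (o_move o) (o_lam o) (o_mu o) (o_inst o) by case.
apply: (eq_from_nth (x0 := (@occ0 F))); first by rewrite size_map.
move=> i; rewrite size_map => it; have is' : i < size s by rewrite -Hsz.
rewrite (nth_map (@occ0 F)) // [RHS]occ_eta /rename_occ.
case: (HM i it) => -> ->.
case Pi: (pol A t i).
  congr Occ; last exact: HO.
  have [_ Mzt _ _ _] := Jt i it; have [_ Mzs _ _ _] := Js i is'.
  have := Mt i it; have := Ms i is'; rewrite -Hpol // Pi => /allNone -> /allNone ->.
  by rewrite Mzt Mzs; case: (HM i it) => ->.
case: i it is' Pi => [|j] it is' Pi.
  by rewrite P0 in Pi.
have Pj : pol A t j.
  by have := At j it; rewrite Pi; case: (pol A t j).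
have Pi' : ~~ pol A s j.+1 by rewrite -Hpol // Pi.
have [_ Mut Iut] := Rt j it (negbT Pi).
have [_ Mus Ius] := Rs j is' Pi'.
have jt : j < size t by apply: ltnW.
congr Occ; first by rewrite Mut Mus /at_of; case: (HM j jt) => ->.
by rewrite Iut Ius HO.
Qed.

Lemma half F ar (A : arena F) (sigma tau : seq (occ F) -> Prop) :
  strategy ar A sigma -> strategy ar A tau ->
  mu_rigid A sigma -> mu_rigid A tau ->
  (forall g, GR sigma g -> GR tau g) ->
  forall s, sigma s -> tau s.
Proof.
move=> [_ Ss _ _ _] [_ St _ _ Ut] Rs Rt HG s ss.
have [t tt Gt] := HG _ (ex_intro2 _ _ s ss erefl).
have [r [ri <-]] := key (proj1 (Ss s ss)) (proj1 (St t tt)) (Rs s ss) (Rt t tt) (esym Gt).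
exact: Ut.
Qed.

Theorem mainTheorem10 (F : Type) (ar : F -> nat) (A : arena F)
    (sigma tau : seq (occ F) -> Prop) :
  wf_arena ar A ->
  strategy ar A sigma -> strategy ar A tau ->
  mu_rigid A sigma -> mu_rigid A tau ->
  (forall g, GR sigma g <-> GR tau g) ->
  forall s, sigma s <-> tau s.
Proof.
move=> _ Hs Ht Rs Rt HG s; split.
  by apply: (half Hs Ht Rs Rt) => g /HG.
by apply: (half Ht Hs Rt Rs) => g /HG.
Qed.
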